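(* Let $\boldsymbol{y}=\sum_{i=1}^r\mathcal{A}_i(\alpha_i\boldsymbol{h}_i\boldsymbol{x}_i^* )$. Assume that for all $1\le i\le r$, $$\|\mathcal{P}_{T_i}\mathcal{A}_i^*\mathcal{A}_i\mathcal{P}_{T_i}-\mathcal{P}_{T_i}\|\le\tfrac14,\qquad\mu\le\tfrac{1}{4r},\qquad\|\mathcal{A}_i\|\le\gamma,$$ and that there exists $\boldsymbol{\lambda}\in\mathbb{C}^L$ such that $$\|\boldsymbol{h}_i\boldsymbol{x}_i^*-\mathcal{P}_{T_i}(\mathcal{A}_i^*(\boldsymbol{\lambda}))\|_F\le\alpha,\qquad\|\mathcal{P}_{T_i^\perp}(\mathcal{A}_i^*(\boldsymbol{\lambda}))\|\le\beta$$ for all $1\le i\le r$, where $(1-\beta)-2r\gamma\alpha>0$. Then $\{\alpha_i\boldsymbol{h}_i\boldsymbol{x}_i^*\}_{i=1}^r$ is the unique minimizer of $\min\sum_i\|\boldsymbol{Z}_i\|_*$ subject to $\sum_i\mathcal{A}_i(\boldsymbol{Z}_i)=\boldsymbol{y}$. In particular, one can choose $\alpha=(5r\gamma)^{-1}$ and $\beta=\frac12$.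
   Context: Standing assumption: $\boldsymbol{h}_i\in\mathbb{R}^{K_i}$, $\boldsymbol{x}_i\in\mathbb{R}^{N_i}$ real unit-norm, $\alpha_i$ scalars. $\mathcal{A}_i(\boldsymbol{Z})=\{\boldsymbol{b}_{i,l}^*\boldsymbol{Z}\boldsymbol{a}_{i,l}\}_{l=1}^L$ (given $\boldsymbol{b}_{i,l}\in\mathbb{C}^{K_i}$, $\boldsymbol{a}_{i,l}\in\mathbb{R}^{N_i}$), with adjoint $\mathcal{A}_i^*(\boldsymbol{z})=\sum_lz_l\boldsymbol{b}_{i,l}\boldsymbol{a}_{i,l}^*$ w.r.t. $\langle\boldsymbol{U},\boldsymbol{V}\rangle=\mathrm{Tr}(\boldsymbol{U}\boldsymbol{V}^* )$; $\|\mathcal{A}_i\|:=\sup_{\boldsymbol{Z}\ne0}\|\mathcal{A}_i(\boldsymbol{Z})\|/\|\boldsymbol{Z}\|_F$; norms of operators on matrix spaces are w.r.t. Frobenius norms; $\|\cdot\|$ on matrices is spectral norm. $\mathcal{P}_{T_i}(\boldsymbol{Z})=\boldsymbol{h}_i\boldsymbol{h}_i^*\boldsymbol{Z}+(\boldsymbol{I}-\boldsymbol{h}_i\boldsymbol{h}_i^* )\boldsymbol{Z}\boldsymbol{x}_i\boldsymbol{x}_i^*$, $\mathcal{P}_{T_i^\perp}(\boldsymbol{Z})=(\boldsymbol{I}-\boldsymbol{h}_i\boldsymbol{h}_i^* )\boldsymbol{Z}(\boldsymbol{I}-\boldsymbol{x}_i\boldsymbol{x}_i^* )$. $\mu:=\max_{j\ne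 k}\|\mathcal{P}_{T_j}\mathcal{A}_j^*\mathcal{A}_k\mathcal{P}_{T_k}\|$. *)

(* Defs.v *)
From HB Require Import structures.
From mathcomp Require Import all_boot all_order all_algebra.
From mathcomp Require Import complex.
From mathcomp Require Import boolp classical_sets reals.
Set Implicit Arguments. Unset Strict Implicit. Unset Printing Implicit Defensive.
Import Order.TTheory GRing.Theory Num.Theory.
Local Open Scope ring_scope.

Section Defs.
Variable R : realType.
Local Notation C := (R[i]).

Definition cabs2 (z : C) : R := complex.Re z ^+ 2 + complex.Im z ^+ 2.

Definition frob m n (M : 'M[C]_(m, n)) : R :=
  Num.sqrt (\sum_(i < m) \sum_(j < n) cabs2 (M i j)).

Definition adjmx m n (M : 'M[C]_(m, n)) : 'M[C]_(n, m) := (map_mx Num.conj M)^T.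

Definition cmx m n (M : 'M[R]_(m, n)) : 'M[C]_(m, n) := map_mx (fun a : R => real_complex R a) M.

Definition opnorm m n p q (f : 'M[C]_(m, n) -> 'M[C]_(p, q)) : R :=
  sup [set t : R | exists Z : 'M[C]_(m, n), Z != 0 /\ t = frob (f Z) / frob Z]%classic.

Definition specnorm m n (M : 'M[C]_(m, n)) : R :=
  opnorm (fun v : 'cV[C]_n => M *m v).

Definition eigvals n (A : 'M[C]_n) : seq C :=
  sval (closed_field_poly_normal (char_poly A)).

(* nuclear norm = sum of the singular values = sum of square roots of the
   eigenvalues of M^* M (which are real and nonnegative) *)
Definition nucnorm m n (M : 'M[C]_(m, n)) : R :=
  \sum_(z <- eigvals (adjmx M *m M)) Num.sqrt (complex.Re z).

Definition Aop K N L (b : 'I_L -> 'cV[C]_K) (a : 'I_L -> 'cV[R]_N)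
  (Z : 'M[C]_(K, N)) : 'cV[C]_L :=
  \col_(l < L) (adjmx (b l) *m Z *m cmx (a l)) 0 0.

Definition Aadj K N L (b : 'I_L -> 'cV[C]_K) (a : 'I_L -> 'cV[R]_N)
  (z : 'cV[C]_L) : 'M[C]_(K, N) :=
  \sum_(l < L) z l 0 *: (b l *m adjmx (cmx (a l))).

Definition PT K N (h : 'cV[R]_K) (x : 'cV[R]_N) (Z : 'M[C]_(K, N)) : 'M[C]_(K, N) :=
  let H := cmx h *m adjmx (cmx h) in
  let X := cmx x *m adjmx (cmx x) in
  H *m Z + (1%:M - H) *m Z *m X.

Definition PTperp K N (h : 'cV[R]_K) (x : 'cV[R]_N) (Z : 'M[C]_(K, N)) : 'M[C]_(K, N) :=
  let H := cmx h *m adjmx (cmx h) in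
  let X := cmx x *m adjmx (cmx x) in
  (1%:M - H) *m Z *m (1%:M - X).

Definition unitvec n (v : 'cV[R]_n) : Prop := \sum_(k < n) v k 0 ^+ 2 = 1.

Definition mu r L (K N : 'I_r -> nat)
  (h : forall i, 'cV[R]_(K i)) (x : forall i, 'cV[R]_(N i))
  (b : forall i, 'I_L -> 'cV[C]_(K i)) (a : forall i, 'I_L -> 'cV[R]_(N i)) : R :=
  \big[Num.max/0]_(j < r) \big[Num.max/0]_(k < r | k != j)
    opnorm (fun Z : 'M[C]_(K k, N k) =>
      PT (h j) (x j) (Aadj (b j) (a j) (Aop (b k) (a k) (PT (h k) (x k) Z)))).

Definition unique_minimizer r L (K N : 'I_r -> nat)
  (b : forall i, 'I_L -> 'cV[C]_(K i)) (a : forall i, 'I_L -> 'cV[R]_(N i))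
  (y : 'cV[C]_L) (X : forall i, 'M[C]_(K i, N i)) : Prop :=
  (\sum_(i < r) Aop (b i) (a i) (X i) = y) /\
  forall Z : forall i, 'M[C]_(K i, N i),
    \sum_(i < r) Aop (b i) (a i) (Z i) = y ->
    ~ (forall i, Z i = X i) ->
    \sum_(i < r) nucnorm (X i) < \sum_(i < r) nucnorm (Z i).

End Defs.

(* Main.v *)
Require Import Defs.
From HB Require Import structures.
From mathcomp Require Import all_boot all_order all_algebra.
From mathcomp Require Import complex.
From mathcomp Require Import boolp classical_sets reals.
From mathcomp Require spectral sesquilinear.
From mathcomp Require Import ring lra.
Import Order.TTheory GRing.Theory Num.Theory.
Local Open Scope ring_scope.

Module Helpers.
Import spectral sesquilinear.
Set Implicit Arguments. Unset Strict Implicit. Unset Printing Implicit Defensive.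
Import Order.TTheory GRing.Theory Num.Theory.
Local Open Scope ring_scope.
Notation rRe := (@complex.Re _).
Notation rIm := (@complex.Im _).
Local Open Scope complex_scope.

Section P1.
Variable R : realType.
Local Notation C := (R[i]).

Lemma ReD (u v : C) : rRe (u + v) = rRe u + rRe v.
Proof. by case: u; case: v. Qed.
Lemma ImD (u v : C) : rIm (u + v) = rIm u + rIm v. Proof. by case: u; case: v. Qed.
Lemma ReN (u : C) : rRe (- u) = - rRe u. Proof. by case: u. Qed.
Lemma ImN (u : C) : rIm (- u) = - rIm u. Proof. by case: u. Qed.
Lemma Re0 : rRe (0 : C) = 0. Proof. by []. Qed.
Lemma Im0 : rIm (0 : C) = 0. Proof. by []. Qed.
Lemma ReM (u v : C) : rRe (u * v) = rRe u * rRe v - rIm u * rIm v. Proof. by case: u; case: v. Qed.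
Lemma ImM (u v : C) : rIm (u * v) = rRe u * rIm v + rIm u * rRe v. Proof. by case: u; case: v. Qed.
Lemma ReJ (u : C) : rRe (Num.conj u) = rRe u. Proof. by case: u. Qed.
Lemma ImJ (u : C) : rIm (Num.conj u) = - rIm u. Proof. by case: u. Qed.
Lemma Rec (a : R) : rRe (real_complex R a) = a. Proof. by []. Qed.
Lemma Imc (a : R) : rIm (real_complex R a) = 0. Proof. by []. Qed.
Lemma Re_sum I (s : seq I) (P : pred I) (F : I -> C) :
  rRe (\sum_(i <- s | P i) F i) = \sum_(i <- s | P i) rRe (F i).
Proof. exact: (big_morph _ ReD Re0). Qed.
Lemma Im_sum I (s : seq I) (P : pred I) (F : I -> C) :
  rIm (\sum_(i <- s | P i) F i) = \sum_(i <- s | P i) rIm (F i).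
Proof. exact: (big_morph _ ImD Im0). Qed.

Lemma cabs2_ge0 (z : C) : 0 <= cabs2 z.
Proof. by rewrite /cabs2 addr_ge0 // sqr_ge0. Qed.
Lemma cabs2M (u v : C) : cabs2 (u * v) = cabs2 u * cabs2 v.
Proof. rewrite /cabs2 ReM ImM; ring. Qed.
Lemma cabs2_eq0 (z : C) : cabs2 z = 0 -> z = 0.
Proof.
case: z => a b; rewrite /cabs2 /= => H.
have ha : a ^+ 2 = 0 by apply/eqP; rewrite eq_le sqr_ge0 andbT -H lerDl sqr_ge0.
have hb : b ^+ 2 = 0 by move: H; rewrite ha add0r.
by move/eqP: ha; rewrite sqrf_eq0 => /eqP->; move/eqP: hb; rewrite sqrf_eq0 => /eqP->.
Qed.
Lemma cabs2E (z : C) : cabs2 z = rRe (z * Num.conj z).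
Proof. rewrite /cabs2 ReM ReJ ImJ; ring. Qed.
Lemma Im_mulJ (z : C) : rIm (z * Num.conj z) = 0.
Proof. rewrite ImM ReJ ImJ; ring. Qed.
Lemma mulJ_real (z : C) : Num.conj z * z = real_complex R (cabs2 z).
Proof. case: z => a b; rewrite /cabs2 /=; apply/eqP; rewrite eq_complex /=; apply/andP; split; apply/eqP; ring. Qed.

End P1.

Section P2.
Variable R : realType.
Local Notation C := (R[i]).

Lemma sq_le (x y : R) : 0 <= y -> x ^+ 2 <= y ^+ 2 -> x <= y.
Proof.
move=> y0 h; have [x0|x0] := leP x 0; first exact: le_trans x0 y0.
by rewrite -ler_sqr // qualifE /= ltW.
Qed.

Definition rip m n (U V : 'M[C]_(m, n)) : R :=
  \sum_(i < m) \sum_(j < n) (rRe (U i j) * rRe (V i j) + rIm (U i j) * rIm (V i j)).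

Lemma frobE m n (U : 'M[C]_(m, n)) : frob U = Num.sqrt (rip U U).
Proof. by rewrite /frob /rip /cabs2; congr Num.sqrt; apply eq_bigr => i _; apply eq_bigr => j _; rewrite !expr2. Qed.

Lemma ripC m n (U V : 'M[C]_(m, n)) : rip U V = rip V U.
Proof. by apply eq_bigr => i _; apply eq_bigr => j _; rewrite mulrC [rIm _ * _]mulrC. Qed.

Lemma ripDl m n (U V W : 'M[C]_(m, n)) : rip (U + V) W = rip U W + rip V W.
Proof.
rewrite /rip -big_split; apply eq_bigr => i _; rewrite -big_split; apply eq_bigr => j _.
rewrite !mxE ReD ImD /=; ring.
Qed.
Lemma ripNl m n (U W : 'M[C]_(m, n)) : rip (- U) W = - rip U W.
Proof.
rewrite /rip -sumrN; apply eq_bigr => i _; rewrite -sumrN; apply eq_bigr => j _.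
rewrite !mxE ReN ImN; ring.
Qed.
Lemma ripZl m n (a : R) (U W : 'M[C]_(m, n)) : rip (real_complex R a *: U) W = a * rip U W.
Proof.
rewrite /rip mulr_sumr; apply eq_bigr => i _; rewrite mulr_sumr; apply eq_bigr => j _.
rewrite !mxE ReM ImM /=; ring.
Qed.
Lemma rip0l m n (W : 'M[C]_(m, n)) : rip 0 W = 0.
Proof. by rewrite /rip big1 // => i _; rewrite big1 // => j _; rewrite !mxE /=; ring. Qed.
Lemma ripBl m n (U V W : 'M[C]_(m, n)) : rip (U - V) W = rip U W - rip V W.
Proof. by rewrite ripDl ripNl. Qed.
Lemma ripDr m n (U V W : 'M[C]_(m, n)) : rip W (U + V) = rip W U + rip W V.
Proof. by rewrite ripC ripDl ripC (ripC V). Qed.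
Lemma ripNr m n (U W : 'M[C]_(m, n)) : rip W (- U) = - rip W U.
Proof. by rewrite ripC ripNl ripC. Qed.
Lemma ripBr m n (U V W : 'M[C]_(m, n)) : rip W (U - V) = rip W U - rip W V.
Proof. by rewrite ripDr ripNr. Qed.
Lemma ripZr m n (a : R) (U W : 'M[C]_(m, n)) : rip W (real_complex R a *: U) = a * rip W U.
Proof. by rewrite ripC ripZl ripC. Qed.
Lemma rip0r m n (W : 'M[C]_(m, n)) : rip W 0 = 0.
Proof. by rewrite ripC rip0l. Qed.
Lemma rip_sumr m n I (s : seq I) (P : pred I) (F : I -> 'M[C]_(m, n)) W :
  rip W (\sum_(k <- s | P k) F k) = \sum_(k <- s | P k) rip W (F k).
Proof. exact: (big_morph (rip W) (fun U V => ripDr U V W) (rip0r W)). Qed.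
Lemma rip_suml m n I (s : seq I) (P : pred I) (F : I -> 'M[C]_(m, n)) W :
  rip (\sum_(k <- s | P k) F k) W = \sum_(k <- s | P k) rip (F k) W.
Proof. exact: (big_morph (fun X => rip X W) (fun U V => ripDl U V W) (rip0l W)). Qed.

Lemma rip_ge0 m n (U : 'M[C]_(m, n)) : 0 <= rip U U.
Proof. by rewrite sumr_ge0 // => i _; rewrite sumr_ge0 // => j _; rewrite -!expr2 addr_ge0 // sqr_ge0. Qed.

Lemma rip_cabs2 m n (U : 'M[C]_(m, n)) : rip U U = \sum_i \sum_j cabs2 (U i j).
Proof. by apply eq_bigr => i _; apply eq_bigr => j _; rewrite /cabs2 !expr2. Qed.

Lemma cabs2_le_rip m n (U : 'M[C]_(m, n)) i j : cabs2 (U i j) <= rip U U.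
Proof.
rewrite rip_cabs2 (bigD1 i) //= (bigD1 j) //= -addrA lerDl addr_ge0 //.
  by rewrite sumr_ge0 // => ? _; exact: cabs2_ge0.
by rewrite sumr_ge0 // => ? _; rewrite sumr_ge0 // => ? _; exact: cabs2_ge0.
Qed.

Lemma rip_eq0 m n (U : 'M[C]_(m, n)) : rip U U = 0 -> U = 0.
Proof.
move=> H; apply/matrixP => i j; rewrite mxE; apply: cabs2_eq0.
by apply/eqP; rewrite eq_le cabs2_ge0 andbT -H cabs2_le_rip.
Qed.

Lemma frob_ge0 m n (U : 'M[C]_(m, n)) : 0 <= frob U.
Proof. by rewrite frobE sqrtr_ge0. Qed.
Lemma frob_sq m n (U : 'M[C]_(m, n)) : frob U ^+ 2 = rip U U.
Proof. by rewrite frobE sqr_sqrtr // rip_ge0. Qed.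
Lemma frob_eq0 m n (U : 'M[C]_(m, n)) : frob U = 0 -> U = 0.
Proof. by move=> H; apply: rip_eq0; rewrite -frob_sq H expr0n. Qed.
Lemma frob0 m n : frob (0 : 'M[C]_(m, n)) = 0.
Proof. by rewrite frobE rip0l sqrtr0. Qed.
Lemma frob_gt0 m n (U : 'M[C]_(m, n)) : U != 0 -> 0 < frob U.
Proof. by move=> h; rewrite lt_def frob_ge0 andbT; apply/eqP => /frob_eq0 /eqP; rewrite (negbTE h). Qed.

Lemma CS m n (U V : 'M[C]_(m, n)) : rip U V <= frob U * frob V.
Proof.
set a := rip V V; set b := rip U V; set c := rip U U.
have q t : 0 <= c - 2 * t * b + t ^+ 2 * a.
  have := rip_ge0 (U - real_complex R t *: V).
  rewrite ripBl !ripBr !ripZl !ripZr (ripC V U) -/a -/b -/c.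
  move=> h; apply: le_trans h _; rewrite le_eqVlt; apply/orP; left; apply/eqP; ring.
have a0 : 0 <= a by exact: rip_ge0.
have c0 : 0 <= c by exact: rip_ge0.
have [b0|b0] := leP b 0; first by apply: le_trans b0 _; rewrite mulr_ge0 // frob_ge0.
apply: sq_le; first by rewrite mulr_ge0 // frob_ge0.
rewrite exprMn !frob_sq -/a -/c.
have [a00|a0'] := eqVneq a 0.
  exfalso; have := q ((c + 1) / (2 * b)); rewrite a00 mulr0 addr0.
  have e : 2 * ((c + 1) / (2 * b)) * b = c + 1.
    by field; rewrite gt_eqF.
  by rewrite e; lra.
have ap : 0 < a by rewrite lt_def a0' a0.
have := q (b / a); have e : b / a * a = b by rewrite divfK.
move=> h; have h2 : 0 <= c - b / a * b by move: h e; set t := b / a; nra.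
move: h2 e; set t := b / a; nra.
Qed.

Lemma CSabs m n (U V : 'M[C]_(m, n)) : `|rip U V| <= frob U * frob V.
Proof.
have [h|h] := ler0P (rip U V); last exact: CS.
by rewrite -ripNl; have := CS (- U) V; rewrite ripNl frobE ripNl ripNr opprK -frobE.
Qed.

Lemma frobN m n (U : 'M[C]_(m, n)) : frob (- U) = frob U.
Proof. by rewrite !frobE ripNl ripNr opprK. Qed.

Lemma frobD m n (U V : 'M[C]_(m, n)) : frob (U + V) <= frob U + frob V.
Proof.
apply: sq_le; first by rewrite addr_ge0 // frob_ge0.
rewrite frob_sq ripDl !ripDr (ripC V U) sqrrD !frob_sq.
have := CS U V; lra.
Qed.

Lemma frobB m n (U V : 'M[C]_(m, n)) : frob (U - V) <= frob U + frob V.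
Proof. by rewrite -(frobN V) frobD. Qed.

Lemma frob_sum m n I (s : seq I) (P : pred I) (F : I -> 'M[C]_(m, n)) :
  frob (\sum_(k <- s | P k) F k) <= \sum_(k <- s | P k) frob (F k).
Proof.
elim/big_rec2: _; first by rewrite frob0.
by move=> k y1 y2 _ h; apply: le_trans (frobD _ _) _; rewrite lerD2l.
Qed.

Lemma frobZ m n (c : C) (U : 'M[C]_(m, n)) : frob (c *: U) = Num.sqrt (cabs2 c) * frob U.
Proof.
rewrite /frob -sqrtrM ?cabs2_ge0 //; congr Num.sqrt.
rewrite mulr_sumr; apply eq_bigr => i _; rewrite mulr_sumr; apply eq_bigr => j _.
by rewrite mxE cabs2M.
Qed.

Lemma frobZr m n (a : R) (U : 'M[C]_(m, n)) : frob (real_complex R a *: U) = `|a| * frob U.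
Proof. by rewrite frobZ /cabs2 /= expr0n addr0 sqrtr_sqr. Qed.

Lemma entry_le_frob m n (U : 'M[C]_(m, n)) i j : Num.sqrt (cabs2 (U i j)) <= frob U.
Proof. by rewrite frobE ler_wsqrtr // cabs2_le_rip. Qed.

End P2.

Section P3.
Variable R : realType.
Local Notation C := (R[i]).

Lemma opnorm_ge0 m n p q (f : 'M[C]_(m, n) -> 'M[C]_(p, q)) : 0 <= opnorm f.
Proof.
rewrite /opnorm; set S := (X in sup X).
have [hs|hs] := pselect (has_sup S); last by rewrite sup_out.
case: (hs) => [[t ht] _].
have hub : t <= sup S by apply: (sup_upper_bound hs).
apply: le_trans hub.
by case: ht => Z [_ ->]; rewrite divr_ge0 // frob_ge0.
Qed.

Lemma opnorm_le m n p q (f : 'M[C]_(m, n) -> 'M[C]_(p, q)) :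
  (forall U V, f (U + V) = f U + f V) -> (forall c U, f (c *: U) = c *: f U) ->
  forall Z, frob (f Z) <= opnorm f * frob Z.
Proof.
move=> fD fZ.
have f0 : f 0 = 0.
  have h := fD 0 0; rewrite addr0 in h; by apply: (addrI (f 0)); rewrite -h addr0.
set B := \sum_(i < m) \sum_(j < n) frob (f (delta_mx i j)).
have bnd Z : frob (f Z) <= frob Z * B.
  rewrite {1}(matrix_sum_delta Z) (big_morph f fD f0).
  apply: le_trans (frob_sum _ _ _) _; rewrite /B mulr_sumr; apply: ler_sum => i _.
  rewrite (big_morph f fD f0); apply: le_trans (frob_sum _ _ _) _; rewrite mulr_sumr.
  apply: ler_sum => j _; rewrite fZ frobZ ler_wpM2r ?frob_ge0 //; exact: entry_le_frob.
move=> Z; have [->|Z0] := eqVneq Z 0; first by rewrite f0 frob0 frob0 mulr0.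
have fp := frob_gt0 Z0.
rewrite /opnorm; set S := (X in sup X).
have hs : has_sup S.
  split; first by exists (frob (f Z) / frob Z); exists Z.
  exists B => t [W [W0 ->]]; rewrite ler_pdivrMr ?frob_gt0 // mulrC; exact: bnd.
have hub : frob (f Z) / frob Z <= sup S by apply: (sup_upper_bound hs); exists Z.
by move: hub; rewrite ler_pdivrMr.
Qed.

End P3.

Section P4.
Variable R : realType.
Local Notation C := (R[i]).
Local Notation conj := (@Num.conj C).

Lemma adjmxE m n (M : 'M[C]_(m, n)) i j : adjmx M i j = conj (M j i).
Proof. by rewrite /adjmx !mxE. Qed.

Lemma conjK (z : C) : conj (conj z) = z.
Proof. by apply/eqP; rewrite eq_complex !ReJ !ImJ opprK !eqxx. Qed.

Lemma adjmxK m n (M : 'M[C]_(m, n)) : adjmx (adjmx M) = M.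
Proof. by apply/matrixP => i j; rewrite !adjmxE conjK. Qed.

Lemma adjmx_mul m n p (A : 'M[C]_(m, n)) (B : 'M[C]_(n, p)) :
  adjmx (A *m B) = adjmx B *m adjmx A.
Proof.
apply/matrixP => i j; rewrite adjmxE !mxE rmorph_sum; apply: eq_bigr => k _.
by rewrite rmorphM /= !adjmxE mulrC.
Qed.

Lemma adjmxD m n (A B : 'M[C]_(m, n)) : adjmx (A + B) = adjmx A + adjmx B.
Proof. by apply/matrixP => i j; rewrite /adjmx !mxE rmorphD. Qed.
Lemma adjmxN m n (A : 'M[C]_(m, n)) : adjmx (- A) = - adjmx A.
Proof. by apply/matrixP => i j; rewrite /adjmx !mxE rmorphN. Qed.
Lemma adjmxB m n (A B : 'M[C]_(m, n)) : adjmx (A - B) = adjmx A - adjmx B.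
Proof. by rewrite adjmxD adjmxN. Qed.
Lemma adjmx0 m n : adjmx (0 : 'M[C]_(m, n)) = 0.
Proof. by apply/matrixP => i j; rewrite /adjmx !mxE rmorph0. Qed.
Lemma adjmxZ m n c (A : 'M[C]_(m, n)) : adjmx (c *: A) = conj c *: adjmx A.
Proof. by apply/matrixP => i j; rewrite /adjmx !mxE rmorphM. Qed.
Lemma adjmx1 n : adjmx (1%:M : 'M[C]_n) = 1%:M.
Proof. by apply/matrixP => i j; rewrite /adjmx !mxE rmorphMn rmorph1 eq_sym. Qed.
Lemma adjmx_sum m n I (s : seq I) (P : pred I) (F : I -> 'M[C]_(m, n)) :
  adjmx (\sum_(k <- s | P k) F k) = \sum_(k <- s | P k) adjmx (F k).
Proof. exact: (big_morph _ (@adjmxD m n) (@adjmx0 m n)). Qed.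

Definition cip m n (U V : 'M[C]_(m, n)) : C := \tr (U *m adjmx V).

Lemma ripE m n (U V : 'M[C]_(m, n)) : rip U V = rRe (cip U V).
Proof.
rewrite /cip /mxtrace Re_sum /rip; apply: eq_bigr => i _.
rewrite mxE Re_sum; apply: eq_bigr => j _; rewrite adjmxE ReM ReJ ImJ; ring.
Qed.

Lemma cipDr m n (U V W : 'M[C]_(m, n)) : cip W (U + V) = cip W U + cip W V.
Proof. by rewrite /cip adjmxD mulmxDr mxtraceD. Qed.
Lemma cipDl m n (U V W : 'M[C]_(m, n)) : cip (U + V) W = cip U W + cip V W.
Proof. by rewrite /cip mulmxDl mxtraceD. Qed.
Lemma cip0r m n (W : 'M[C]_(m, n)) : cip W 0 = 0.
Proof. by rewrite /cip adjmx0 mulmx0 mxtrace0. Qed.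
Lemma cipZr m n c (U W : 'M[C]_(m, n)) : cip W (c *: U) = conj c * cip W U.
Proof. by rewrite /cip adjmxZ -scalemxAr mxtraceZ. Qed.
Lemma cipZl m n c (U W : 'M[C]_(m, n)) : cip (c *: U) W = c * cip U W.
Proof. by rewrite /cip -scalemxAl mxtraceZ. Qed.
Lemma cip_sumr m n I (s : seq I) (P : pred I) (F : I -> 'M[C]_(m, n)) W :
  cip W (\sum_(k <- s | P k) F k) = \sum_(k <- s | P k) cip W (F k).
Proof. exact: (big_morph (cip W) (fun U V => cipDr U V W) (cip0r W)). Qed.

Lemma cip_mull m n p (A : 'M[C]_(m, n)) (U : 'M[C]_(n, p)) V :
  cip (A *m U) V = cip U (adjmx A *m V).
Proof. by rewrite /cip adjmx_mul adjmxK -mulmxA mxtrace_mulC mulmxA. Qed.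
Lemma cip_mulr m n p (B : 'M[C]_(n, p)) (U : 'M[C]_(m, n)) V :
  cip (U *m B) V = cip U (V *m adjmx B).
Proof. by rewrite /cip adjmx_mul adjmxK mulmxA. Qed.

Lemma rip_mull m n p (A : 'M[C]_(m, n)) (U : 'M[C]_(n, p)) V :
  rip (A *m U) V = rip U (adjmx A *m V).
Proof. by rewrite !ripE cip_mull. Qed.
Lemma rip_mulr m n p (B : 'M[C]_(n, p)) (U : 'M[C]_(m, n)) V :
  rip (U *m B) V = rip U (V *m adjmx B).
Proof. by rewrite !ripE cip_mulr. Qed.

Lemma adjmx_cmx m n (M : 'M[R]_(m, n)) : adjmx (cmx M) = cmx M^T.
Proof. by apply/matrixP => i j; rewrite adjmxE !mxE; apply/eqP; rewrite eq_complex ReJ ImJ /= oppr0 !eqxx. Qed.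

End P4.

Section P5.
Variable R : realType.
Local Notation C := (R[i]).
Local Notation conj := (@Num.conj C).

Lemma unit_adj n (h : 'cV[R]_n) : unitvec h -> adjmx (cmx h) *m cmx h = 1%:M.
Proof.
move=> hu; apply/matrixP => i j; rewrite !ord1 !mxE.
rewrite (eq_bigr (fun k => real_complex R (h k 0 ^+ 2))); last first.
  by move=> k _; rewrite adjmx_cmx !mxE expr2 rmorphM.
by rewrite -rmorph_sum hu.
Qed.

Definition Hm_def n (v : 'cV[R]_n) : 'M[C]_n := cmx v *m adjmx (cmx v).
Fact Hm_key : unit. Proof. exact: tt. Qed.
Definition Hm := locked_with Hm_key Hm_def.
Lemma HmE n (v : 'cV[R]_n) : Hm v = cmx v *m adjmx (cmx v).
Proof. by rewrite /Hm unlock. Qed.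
Definition Pm_def n (v : 'cV[R]_n) : 'M[C]_n := 1%:M - Hm v.
Fact Pm_key : unit. Proof. exact: tt. Qed.
Definition Pm := locked_with Pm_key Pm_def.
Lemma PmE n (v : 'cV[R]_n) : Pm v = 1%:M - Hm v.
Proof. by rewrite /Pm unlock. Qed.

Section Proj.
Variables (K N : nat) (h : 'cV[R]_K) (x : 'cV[R]_N).
Hypotheses (hu : unitvec h) (xu : unitvec x).
Local Notation H := (Hm h).
Local Notation X := (Hm x).
Local Notation P := (Pm h).

Lemma HH : H *m H = H.
Proof. by rewrite HmE mulmxA -(mulmxA (cmx h)) unit_adj // mulmx1. Qed.
Lemma XX : X *m X = X.
Proof. by rewrite HmE mulmxA -(mulmxA (cmx x)) unit_adj // mulmx1. Qed.
Lemma adjH : adjmx H = H.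
Proof. by rewrite HmE adjmx_mul adjmxK. Qed.
Lemma adjX : adjmx X = X.
Proof. by rewrite HmE adjmx_mul adjmxK. Qed.
Lemma adjP : adjmx P = P.
Proof. by rewrite PmE adjmxB adjmx1 adjH. Qed.
Lemma HP : H *m P = 0.
Proof. by rewrite PmE mulmxBr mulmx1 HH subrr. Qed.
Lemma PH : P *m H = 0.
Proof. by rewrite PmE mulmxBl mul1mx HH subrr. Qed.
Lemma PP : P *m P = P.
Proof. by rewrite {1}PmE mulmxBl mul1mx HP subr0. Qed.

Lemma PTE Z : PT h x Z = H *m Z + P *m Z *m X.
Proof. by rewrite PmE !HmE. Qed.
Lemma PTperpE Z : PTperp h x Z = P *m Z *m (1%:M - X).
Proof. by rewrite PmE !HmE. Qed.

Lemma PTD U V : PT h x (U + V) = PT h x U + PT h x V.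
Proof.
by rewrite !PTE !mulmxDr !mulmxDl addrACA.
Qed.
Lemma PTZ c U : PT h x (c *: U) = c *: PT h x U.
Proof. by rewrite !PTE scalerDr -!scalemxAr -!scalemxAl. Qed.

Lemma PTB U V : PT h x (U - V) = PT h x U - PT h x V.
Proof. by move: (PTD (U - V) V); rewrite subrK => ->; rewrite addrK. Qed.

Lemma PT_PT Z : PT h x (PT h x Z) = PT h x Z.
Proof.
rewrite !PTE !mulmxDr !mulmxDl !mulmxA HH HP PH PP !mul0mx addr0 add0r.
by rewrite -(mulmxA _ X X) XX.
Qed.

Lemma rip_PT U V : rip (PT h x U) V = rip U (PT h x V).
Proof.
rewrite !PTE ripDl ripDr rip_mull adjH; congr (_ + _).
by rewrite rip_mulr rip_mull adjX adjP mulmxA.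
Qed.

Lemma PTperp_PT Z : PTperp h x Z = Z - PT h x Z.
Proof.
rewrite PTperpE PTE mulmxBr mulmx1 {1}PmE mulmxBl mul1mx.
by rewrite opprD addrA.
Qed.

Lemma PT_PTperp Z : PT h x (PTperp h x Z) = 0.
Proof. by rewrite PTperp_PT PTB PT_PT subrr. Qed.

Lemma PTperpD U V : PTperp h x (U + V) = PTperp h x U + PTperp h x V.
Proof. by rewrite !PTperp_PT PTD opprD addrACA. Qed.

Lemma PTperp_PTperp Z : PTperp h x (PTperp h x Z) = PTperp h x Z.
Proof. by rewrite {1}PTperp_PT PT_PTperp subr0. Qed.

Lemma rip_PTperp U V : rip (PTperp h x U) V = rip U (PTperp h x V).
Proof. by rewrite !PTperp_PT ripBl ripBr rip_PT. Qed.

Lemma rip_PT_PTperp U V : rip (PT h x U) (PTperp h x V) = 0.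
Proof. by rewrite rip_PT PT_PTperp rip0r. Qed.

Definition E0 := cmx h *m adjmx (cmx x).

Lemma PT_E0 : PT h x E0 = E0.
Proof.
have e : H *m E0 = E0 by rewrite HmE /E0 mulmxA -(mulmxA (cmx h)) unit_adj // mulmx1.
by rewrite PTE e PmE mulmxBl mul1mx e subrr !mul0mx addr0.
Qed.

Lemma PTperp_E0 : PTperp h x E0 = 0.
Proof. by rewrite PTperp_PT PT_E0 subrr. Qed.

Lemma rip_E0 : rip E0 E0 = 1.
Proof.
rewrite ripE /cip /E0 adjmx_mul adjmxK mulmxA -(mulmxA (cmx h)) unit_adj // mulmx1.
by rewrite mxtrace_mulC unit_adj // mxtrace1.
Qed.

End Proj.

Section Aops.
Variables (K N L : nat) (b : 'I_L -> 'cV[C]_K) (a : 'I_L -> 'cV[R]_N).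

Lemma Aop_entry Z l j : Aop b a Z l j = (adjmx (b l) *m Z *m cmx (a l)) 0 0.
Proof. by rewrite /Aop mxE. Qed.

Lemma AopD U V : Aop b a (U + V) = Aop b a U + Aop b a V.
Proof. by apply/matrixP => l j; rewrite [in RHS]mxE !Aop_entry mulmxDr mulmxDl mxE. Qed.
Lemma AopZ c U : Aop b a (c *: U) = c *: Aop b a U.
Proof. by apply/matrixP => l j; rewrite [in RHS]mxE !Aop_entry -scalemxAr -scalemxAl mxE. Qed.

Lemma AadjD u v : Aadj b a (u + v) = Aadj b a u + Aadj b a v.
Proof. by rewrite /Aadj -big_split; apply: eq_bigr => l _; rewrite mxE scalerDl. Qed.
Lemma AadjZ c u : Aadj b a (c *: u) = c *: Aadj b a u.
Proof. by rewrite /Aadj scaler_sumr; apply: eq_bigr => l _; rewrite mxE scalerA. Qed.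

Lemma rip_Aop Z u : rip (Aop b a Z) u = rip Z (Aadj b a u).
Proof.
rewrite [RHS]ripE /Aadj cip_sumr Re_sum /rip; apply: eq_bigr => l _.
rewrite big_ord1 cipZr /cip adjmx_mul adjmxK mulmxA mxtrace_mulC mulmxA.
rewrite /mxtrace big_ord1 -(Aop_entry Z l 0) ReM ReJ ImJ; ring.
Qed.

End Aops.

End P5.

Section P6.
Variable R : realType.
Local Notation C := (R[i]).
Local Notation conj := (@Num.conj C).

Lemma tstar_adj m n (M : 'M[C]_(m, n)) : map_mx conj (M^T) = adjmx M.
Proof. by apply/matrixP => i j; rewrite !mxE. Qed.

Lemma char_poly_sim (F : comNzRingType) n (Q D P : 'M[F]_n) :
  Q *m P = 1%:M -> char_poly (Q *m D *m P) = char_poly D.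
Proof.
move=> QP; rewrite /char_poly /char_poly_mx.
set Q' := map_mx (@polyC F) Q; set P' := map_mx (@polyC F) P.
have QP' : Q' *m P' = 1%:M by rewrite -map_mxM QP map_mx1.
have eX : ('X%:M : 'M[{poly F}]_n) = Q' *m 'X%:M *m P'.
  by rewrite mul_mx_scalar -scalemxAl QP' scalemx1.
rewrite map_mxM map_mxM -/Q' -/P' {1}eX -mulmxBl -mulmxBr !det_mulmx.
by rewrite mulrAC -det_mulmx QP' det1 mul1r.
Qed.

End P6.

Section SVD.
Variable R : realType.
Local Notation C := (R[i]).
Local Notation conj := (@Num.conj C).
Variables (m n : nat) (M : 'M[C]_(m, n)).

Definition svdP := spectralmx (adjmx M *m M).
Definition svdd := spectral_diag (adjmx M *m M).
Definition svdU := adjmx svdP.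
Definition svdB := M *m svdU.

Lemma AM_normal : adjmx M *m M \is normalmx.
Proof. by apply/normalmxP; rewrite tstar_adj adjmx_mul adjmxK. Qed.

Lemma svd_decomp : adjmx M *m M = adjmx svdP *m diag_mx svdd *m svdP.
Proof.
have /orthomx_spectralP e := AM_normal.
by rewrite {1}e invmx_unitary ?spectral_unitarymx // tstar_adj.
Qed.

Lemma svdU_unit1 : adjmx svdU *m svdU = 1%:M.
Proof. by rewrite /svdU adjmxK -tstar_adj; apply/unitarymxP; exact: spectral_unitarymx. Qed.

Lemma svdU_unit2 : svdU *m adjmx svdU = 1%:M.
Proof.
rewrite /svdU adjmxK -tstar_adj -invmx_unitary ?spectral_unitarymx //.
by rewrite mulVmx // spectral_unit.
Qed.

Lemma svdBB : adjmx svdB *m svdB = diag_mx svdd.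
Proof.
rewrite /svdB adjmx_mul -mulmxA (mulmxA (adjmx M)) svd_decomp /svdU adjmxK.
have u : svdP *m adjmx svdP = 1%:M by move: svdU_unit1; rewrite /svdU adjmxK.
by rewrite !mulmxA u mul1mx -mulmxA u mulmx1.
Qed.

End SVD.

Section SVD2.
Variable R : realType.
Local Notation C := (R[i]).
Local Notation conj := (@Num.conj C).

Lemma adjmx_mul_entry m n p (X : 'M[C]_(m, n)) (Y : 'M[C]_(m, p)) j k :
  (adjmx X *m Y) j k = \sum_i conj (X i j) * Y i k.
Proof. by rewrite mxE; apply: eq_bigr => i _; rewrite adjmxE. Qed.

Lemma col_norm m n (X : 'M[C]_(m, n)) j : frob (col j X) ^+ 2 = rRe ((adjmx X *m X) j j).
Proof.
rewrite frob_sq adjmx_mul_entry Re_sum /rip; apply: eq_bigr => i _.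
by rewrite big_ord1 !mxE ReM ReJ ImJ; ring.
Qed.

Lemma col_norm_Im m n (X : 'M[C]_(m, n)) j : rIm ((adjmx X *m X) j j) = 0.
Proof.
rewrite adjmx_mul_entry Im_sum big1 // => i _.
by rewrite ImM ReJ ImJ; ring.
Qed.

Lemma col_normC m n (X : 'M[C]_(m, n)) j :
  (adjmx X *m X) j j = real_complex R (frob (col j X) ^+ 2).
Proof. by apply/eqP; rewrite eq_complex col_norm col_norm_Im /= !eqxx. Qed.

Lemma svdd_entry m n (M : 'M[C]_(m, n)) j :
  svdd M 0 j = real_complex R (frob (col j (svdB M)) ^+ 2).
Proof. by rewrite -col_normC svdBB mxE eqxx mulr1n. Qed.

Lemma svdBB_off m n (M : 'M[C]_(m, n)) j k : j != k -> (adjmx (svdB M) *m svdB M) j k = 0.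
Proof. by move=> jk; rewrite svdBB mxE (negbTE jk) mulr0n. Qed.

Lemma eigvals_perm m n (M : 'M[C]_(m, n)) :
  perm_eq (eigvals (adjmx M *m M)) [seq svdd M 0 i | i <- enum 'I_n].
Proof.
apply: prod_XsubC_eq.
have := svalP (closed_field_poly_normal (char_poly (adjmx M *m M))).
rewrite -/(eigvals _) (monicP (char_poly_monic _)) scale1r => <-.
rewrite big_map big_enum /= svd_decomp char_poly_sim; last first.
  by move: (svdU_unit2 M); rewrite /svdU adjmxK.
rewrite char_poly_trig ?diag_mx_is_trig //; apply: eq_bigr => i _.
by rewrite mxE eqxx mulr1n.
Qed.

Lemma nucnormE m n (M : 'M[C]_(m, n)) : nucnorm M = \sum_j frob (col j (svdB M)).
Proof.
rewrite /nucnorm (perm_big _ (eigvals_perm M)) big_map big_enum /=.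
apply: eq_bigr => j _; rewrite svdd_entry /= sqrtr_sqr ger0_norm // ?frob_ge0 //.
Qed.

Lemma nucnorm_ge0 m n (M : 'M[C]_(m, n)) : 0 <= nucnorm M.
Proof. by rewrite nucnormE sumr_ge0 // => j _; exact: frob_ge0. Qed.

End SVD2.

Section P7.
Variable R : realType.
Local Notation C := (R[i]).
Local Notation conj := (@Num.conj C).

Lemma col_mulmx m n p (A : 'M[C]_(m, n)) (B : 'M[C]_(n, p)) j : col j (A *m B) = A *m col j B.
Proof. by apply/matrixP => i k; rewrite !mxE; apply: eq_bigr => l _; rewrite !mxE. Qed.

Lemma rip_cols m n (X Y : 'M[C]_(m, n)) : rip X Y = \sum_j rip (col j X) (col j Y).
Proof.
rewrite /rip exchange_big; apply: eq_bigr => j _; apply: eq_bigr => i _.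
by rewrite big_ord1 !mxE.
Qed.

Lemma sum_sq_le I (r : seq I) (P : pred I) (f : I -> R) : (forall i, 0 <= f i) ->
  \sum_(i <- r | P i) f i ^+ 2 <= (\sum_(i <- r | P i) f i) ^+ 2.
Proof.
move=> f0; have : \sum_(i <- r | P i) f i ^+ 2 <= (\sum_(i <- r | P i) f i) ^+ 2 /\
   0 <= \sum_(i <- r | P i) f i; last by case.
elim/big_rec2: _; first by rewrite expr0n /= lexx.
move=> i y1 y2 _ [h1 h2]; have := f0 i; split; first by nra.
by rewrite addr_ge0.
Qed.

Lemma frob_col_unit n (U : 'M[C]_n) j : adjmx U *m U = 1%:M -> frob (col j U) = 1.
Proof.
move=> u; have h := col_norm U j; rewrite u mxE eqxx /= in h.
by rewrite frobE -frob_sq h sqrtr1.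
Qed.

Lemma rip_svdB m n (W M : 'M[C]_(m, n)) : rip (W *m svdU M) (svdB M) = rip W M.
Proof. by rewrite rip_mulr /svdB -mulmxA svdU_unit2 mulmx1. Qed.

Lemma dual m n (W M : 'M[C]_(m, n)) (s : R) :
  (forall v : 'cV[C]_n, frob (W *m v) <= s * frob v) -> rip W M <= s * nucnorm M.
Proof.
move=> hW; rewrite -rip_svdB rip_cols nucnormE mulr_sumr; apply: ler_sum => j _.
apply: le_trans (CS _ _) _; rewrite ler_wpM2r ?frob_ge0 //.
by rewrite col_mulmx; have := hW (col j (svdU M)); rewrite frob_col_unit ?mulr1 // svdU_unit1.
Qed.

Lemma frob_le_nuc m n (M : 'M[C]_(m, n)) : frob M <= nucnorm M.
Proof.
apply: sq_le; first exact: nucnorm_ge0.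
rewrite frob_sq -(rip_svdB M M) -/(svdB M) rip_cols nucnormE.
under eq_bigr => j _ do rewrite -frob_sq.
by apply: sum_sq_le => j; exact: frob_ge0.
Qed.

Lemma rank1_entry m n (u : 'cV[C]_m) (w : 'cV[C]_n) i j :
  (u *m adjmx w) i j = u i 0 * conj (w j 0).
Proof. by rewrite mxE big_ord1 adjmxE. Qed.

Lemma rank1_BB m n (u : 'cV[C]_m) (w : 'cV[C]_n) j k :
  (adjmx (u *m adjmx w) *m (u *m adjmx w)) j k =
  w j 0 * conj (w k 0) * \sum_i (conj (u i 0) * u i 0).
Proof.
rewrite adjmx_mul_entry mulr_sumr; apply: eq_bigr => i _.
rewrite !rank1_entry rmorphM /= conjK; ring.
Qed.

Lemma nuc_rank1 m n (u : 'cV[C]_m) (v : 'cV[C]_n) : nucnorm (u *m adjmx v) <= frob (u *m adjmx v).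
Proof.
set M := u *m adjmx v.
have eB : svdB M = u *m adjmx (adjmx (svdU M) *m v).
  by rewrite /svdB /M -mulmxA adjmx_mul adjmxK.
set w := adjmx (svdU M) *m v.
set f := fun j => frob (col j (svdB M)).
have f0 j : 0 <= f j by exact: frob_ge0.
have off j k : j != k -> f j * f k = 0.
  move=> jk; have h := svdBB_off M jk.
  have e2 : (f j * f k) ^+ 2 = cabs2 ((adjmx (svdB M) *m svdB M) j k).
    rewrite exprMn /f !col_norm eB !rank1_BB.
    set s := \sum_i _.
    have Ims : rIm s = 0 by rewrite Im_sum big1 // => i _; rewrite mulrC Im_mulJ.
    rewrite /cabs2 !ReM !ImM !ReJ !ImJ Ims; ring.
  by move: e2; rewrite h /cabs2 /= expr0n addr0 => /eqP; rewrite sqrf_eq0 => /eqP.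
apply: sq_le; first exact: frob_ge0.
rewrite frob_sq -(rip_svdB M M) rip_cols nucnormE -/f expr2 mulr_suml.
apply: ler_sum => j _; rewrite mulr_sumr (bigD1 j) //= big1 ?addr0; last first.
  by move=> k kj; rewrite off // eq_sym.
by rewrite -/(svdB M) -frob_sq expr2.
Qed.

End P7.

Section P8.
Variable R : realType.
Local Notation C := (R[i]).
Local Notation conj := (@Num.conj C).

Lemma rip_vec1 n (v : 'cV[R]_n) p (z : 'M[C]_(1, p)) :
  unitvec v -> rip (cmx v *m z) (cmx v *m z) = rip z z.
Proof. by move=> vu; rewrite rip_mull mulmxA unit_adj // mul1mx. Qed.

Lemma pyth K p (h : 'cV[R]_K) (u : 'M[C]_(K, p)) : unitvec h ->
  frob u ^+ 2 = frob (Pm h *m u) ^+ 2 + frob (Hm h *m u) ^+ 2.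
Proof.
move=> hu; rewrite !frob_sq.
have e : u = Pm h *m u + Hm h *m u by rewrite PmE mulmxBl mul1mx subrK.
rewrite {1 2}e ripDl !ripDr (ripC (Hm h *m u)).
have -> : rip (Pm h *m u) (Hm h *m u) = 0.
  by rewrite rip_mull adjP mulmxA PH // mul0mx rip0r.
by rewrite addr0 add0r.
Qed.

Lemma Pm_contr K p (h : 'cV[R]_K) (u : 'M[C]_(K, p)) : unitvec h ->
  frob (Pm h *m u) <= frob u.
Proof.
move=> hu; apply: sq_le; first exact: frob_ge0.
by rewrite (pyth u hu) lerDl frob_sq rip_ge0.
Qed.

Lemma Hm_frob K p (h : 'cV[R]_K) (u : 'M[C]_(K, p)) : unitvec h ->
  frob (Hm h *m u) ^+ 2 = rip (adjmx (cmx h) *m u) (adjmx (cmx h) *m u).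
Proof. by move=> hu; rewrite frob_sq HmE -mulmxA rip_vec1. Qed.

Section Sign.
Variables (K N : nat) (G : 'M[C]_(K, N)).
Local Notation U := (svdU G).
Local Notation B := (svdB G).
Local Notation f := (fun j => frob (col j (svdB G))).

Definition Sg : 'M[C]_N := diag_mx (\row_j real_complex R ((f j)^-1)).
Definition Wsg := B *m Sg *m adjmx U.

Lemma finv_f (a : R) : 0 <= a -> a^-1 * a ^+ 2 = a.
Proof. by move=> a0; have [->|nz] := eqVneq a 0; [rewrite invr0 mul0r | rewrite expr2 mulrA mulVf ?mul1r]. Qed.

Lemma rip_Wsg : rip Wsg G = nucnorm G.
Proof.
rewrite /Wsg rip_mulr adjmxK -/(svdB G) rip_mull nucnormE /rip.
apply: eq_bigr => i _; rewrite (bigD1 i) //= big1 ?addr0; last first.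
  by move=> j ji; rewrite /Sg !mxE eq_sym (negbTE ji) mulr0n /=; ring.
rewrite col_normC /Sg !mxE eqxx mulr1n /=.
rewrite mulr0 addr0; exact: finv_f (frob_ge0 _).
Qed.

Lemma Wsg_contr (v : 'cV[C]_N) : frob (Wsg *m v) <= frob v.
Proof.
apply: sq_le; first exact: frob_ge0.
set y := adjmx U *m v.
have ey : frob y ^+ 2 = frob v ^+ 2.
  by rewrite !frob_sq rip_mull adjmxK mulmxA svdU_unit2 mul1mx.
rewrite -ey /Wsg -mulmxA -/y -(mulmxA (svdB G)) !frob_sq rip_mull (mulmxA (adjmx (svdB G))) svdBB.
rewrite /Sg !mul_diag_mx /rip; apply: ler_sum => j _; apply: ler_sum => k _.
rewrite !mxE svdd_entry.
move: (\sum_(j0 < N) adjmx U j j0 * v j0 k) => c.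
have fj := frob_ge0 (col j (svdB G)).
move: fj; set a := frob (col j (svdB G)) => fj.
rewrite !ReM !ImM /= !mul0r !subr0 !addr0.
have [->|nz] := eqVneq a 0.
  by rewrite invr0 !mul0r !add0r addr_ge0 // -expr2 sqr_ge0.
have e : a^-1 * a = 1 by rewrite mulVf.
have -> : a^-1 * rRe c * (a ^+ 2 * (a^-1 * rRe c)) = (a^-1 * a) ^+ 2 * (rRe c * rRe c) by ring.
have -> : a^-1 * rIm c * (a ^+ 2 * (a^-1 * rIm c)) = (a^-1 * a) ^+ 2 * (rIm c * rIm c) by ring.
by rewrite e expr1n !mul1r.
Qed.

End Sign.

End P8.

Section P9.
Variable R : realType.
Local Notation C := (R[i]).
Local Notation conj := (@Num.conj C).

Lemma PmE0 K N (h : 'cV[R]_K) (x : 'cV[R]_N) : unitvec h -> Pm h *m E0 h x = 0.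
Proof.
move=> hu; rewrite PmE mulmxBl mul1mx /E0 HmE mulmxA -(mulmxA (cmx h)) unit_adj //.
by rewrite mulmx1 subrr.
Qed.

Lemma nuc_lower K N (h : 'cV[R]_K) (x : 'cV[R]_N) (al : R) (Hd : 'M[C]_(K, N)) :
  unitvec h -> unitvec x ->
  al + rip (E0 h x) Hd + nucnorm (PTperp h x Hd) <= nucnorm (real_complex R al *: E0 h x + Hd).
Proof.
move=> hu xu; set G := PTperp h x Hd.
set Ws := Wsg G.
set W := E0 h x + Pm h *m Ws *m Pm x.
have hW : forall v : 'cV[C]_N, frob (W *m v) <= frob v.
  move=> v; apply: sq_le; first exact: frob_ge0.
  set z := Ws *m (Pm x *m v).
  have eW : W *m v = E0 h x *m v + Pm h *m z by rewrite /W mulmxDl !mulmxA.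
  have c0 : rip (E0 h x *m v) (Pm h *m z) = 0.
    by rewrite ripC rip_mull adjP mulmxA PmE0 // mul0mx rip0r.
  have e1 : frob (E0 h x *m v) ^+ 2 = frob (Hm x *m v) ^+ 2.
    by rewrite Hm_frob // frob_sq /E0 -mulmxA rip_vec1.
  have e2 := pyth v xu.
  have l1 : frob (Pm h *m z) <= frob (Pm x *m v).
    by apply: le_trans (Pm_contr _ hu) _; exact: Wsg_contr.
  have g1 := frob_ge0 (Pm h *m z); have g2 := frob_ge0 (Pm x *m v).
  rewrite eW frob_sq ripDl !ripDr c0 (ripC (Pm h *m z)) c0 -!frob_sq e1 e2.
  nra.
have hW1 : forall v : 'cV[C]_N, frob (W *m v) <= 1 * frob v by move=> v; rewrite mul1r.
have := dual (real_complex R al *: E0 h x + Hd) hW1; rewrite mul1r => le.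
apply: le_trans le; rewrite le_eqVlt; apply/orP; left; apply/eqP.
rewrite /W ripDl ripDr ripZr rip_E0 // mulr1; congr (_ + _).
have eG : Pm h *m ((real_complex R al *: E0 h x + Hd) *m Pm x) = G.
  rewrite mulmxDl mulmxDr -scalemxAl -scalemxAr (mulmxA (Pm h) (E0 h x)) PmE0 // mul0mx scaler0 add0r.
  by rewrite /G PTperpE -PmE mulmxA.
by rewrite rip_mulr rip_mull adjP adjP eG rip_Wsg.
Qed.

End P9.

Section P10a. Variable R : realType.
Lemma mx_le (r : nat) (F : 'I_r -> 'I_r -> R) j k : k != j ->
  F j k <= \big[Num.max/0]_(j0 < r) \big[Num.max/0]_(k0 < r | k0 != j0) F j0 k0.
Proof.
move=> kj.
have h1 : F j k <= \big[Num.max/0]_(k0 < r | k0 != j) F j k0 by apply: le_bigmax_cond.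
apply: le_trans h1 _.
pose G := fun j0 => \big[Num.max/0]_(k0 < r | k0 != j0) F j0 k0.
have : G j <= \big[Num.max/0]_(j0 < r) G j0 by apply: le_bigmax_cond.
by [].
Qed.
Lemma mx_ge0 (r : nat) (F : 'I_r -> 'I_r -> R) :
  0 <= \big[Num.max/0]_(j0 < r) \big[Num.max/0]_(k0 < r | k0 != j0) F j0 k0.
Proof. by rewrite bigmax_idl le_max lexx. Qed.
End P10a.

Section Main.
Variable R : realType.
Local Notation C := (R[i]).

Lemma AopB K N L (b : 'I_L -> 'cV[C]_K) (a : 'I_L -> 'cV[R]_N) U V :
  Aop b a (U - V) = Aop b a U - Aop b a V.
Proof. by move: (AopD b a (U - V) V); rewrite subrK => ->; rewrite addrK. Qed.

Lemma count_CS r (f : 'I_r -> R) : (\sum_i f i) ^+ 2 <= r%:R * \sum_i f i ^+ 2.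
Proof.
pose u : 'cV[C]_r := \col_i real_complex R (f i).
pose w : 'cV[C]_r := \col_i 1.
have e1 : rip u w = \sum_i f i by apply: eq_bigr => i _; rewrite big_ord1 !mxE /=; ring.
have e2 : rip u u = \sum_i f i ^+ 2 by apply: eq_bigr => i _; rewrite big_ord1 !mxE /=; ring.
have e3 : rip w w = r%:R.
  rewrite /rip (eq_bigr (fun _ => 1)); last by move=> i _; rewrite big_ord1 !mxE /=; ring.
  by rewrite sumr_const card_ord.
have := CSabs u w; rewrite e1 => h.
have : `|\sum_i f i| ^+ 2 <= (frob u * frob w) ^+ 2.
  by rewrite ler_sqr ?qualifE /= ?mulr_ge0 ?frob_ge0 ?normr_ge0.
by rewrite real_normK ?num_real // exprMn !frob_sq e2 e3 mulrC.
Qed.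


Lemma lin_iso K N L (h : 'cV[R]_K) (x : 'cV[R]_N) (b : 'I_L -> 'cV[C]_K) (a : 'I_L -> 'cV[R]_N) :
  let f := fun Z : 'M[C]_(K, N) => PT h x (Aadj b a (Aop b a (PT h x Z))) - PT h x Z in
  (forall U V, f (U + V) = f U + f V) /\ (forall c U, f (c *: U) = c *: f U).
Proof.
move=> f; split.
  by move=> U V; rewrite /f !PTD AopD AadjD PTD opprD addrACA.
by move=> c U; rewrite /f !PTZ AopZ AadjZ PTZ scalerBr.
Qed.

Lemma lin_mu K1 N1 K2 N2 L (h1 : 'cV[R]_K1) (x1 : 'cV[R]_N1) (h2 : 'cV[R]_K2) (x2 : 'cV[R]_N2)
  (b1 : 'I_L -> 'cV[C]_K1) (a1 : 'I_L -> 'cV[R]_N1) (b2 : 'I_L -> 'cV[C]_K2) (a2 : 'I_L -> 'cV[R]_N2) :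
  let f := fun Z : 'M[C]_(K2, N2) => PT h1 x1 (Aadj b1 a1 (Aop b2 a2 (PT h2 x2 Z))) in
  (forall U V, f (U + V) = f U + f V) /\ (forall c U, f (c *: U) = c *: f U).
Proof.
move=> f; split.
  by move=> U V; rewrite /f !PTD AopD AadjD PTD.
by move=> c U; rewrite /f !PTZ AopZ AadjZ PTZ.
Qed.

Lemma main_ineq (r L : nat) (K N : 'I_r -> nat)
  (h : forall i, 'cV[R]_(K i)) (x : forall i, 'cV[R]_(N i)) (alpha_ : 'I_r -> R)
  (b : forall i, 'I_L -> 'cV[C]_(K i)) (a : forall i, 'I_L -> 'cV[R]_(N i))
  (gamma alpha beta : R) (lam : 'cV[C]_L) :
  (forall i, unitvec (h i)) -> (forall i, unitvec (x i)) ->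
  (forall i, 0 < alpha_ i) ->
  (forall i, opnorm (fun Z : 'M[C]_(K i, N i) =>
     PT (h i) (x i) (Aadj (b i) (a i) (Aop (b i) (a i) (PT (h i) (x i) Z)))
     - PT (h i) (x i) Z) <= 4^-1) ->
  mu h x b a <= (4 * r%:R)^-1 ->
  (forall i, opnorm (Aop (b i) (a i)) <= gamma) ->
  (forall i,
        frob (cmx (h i) *m adjmx (cmx (x i)) - PT (h i) (x i) (Aadj (b i) (a i) lam))
          <= alpha /\
        specnorm (PTperp (h i) (x i) (Aadj (b i) (a i) lam)) <= beta) ->
  0 < (1 - beta) - 2 * r%:R * gamma * alpha ->
  forall Z : forall i, 'M[C]_(K i, N i),
  \sum_i Aop (b i) (a i) (Z i) =
    \sum_i Aop (b i) (a i) (real_complex R (alpha_ i) *: (cmx (h i) *m adjmx (cmx (x i)))) ->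
  ~ (forall i, Z i = real_complex R (alpha_ i) *: (cmx (h i) *m adjmx (cmx (x i)))) ->
  \sum_i nucnorm (real_complex R (alpha_ i) *: (cmx (h i) *m adjmx (cmx (x i))))
    < \sum_i nucnorm (Z i).
Proof.
move=> hu xu alp iso hmu hgam hlam hpos Z hZ hneq.
pose X := fun i => real_complex R (alpha_ i) *: (cmx (h i) *m adjmx (cmx (x i))).
pose Hd := fun i => Z i - X i.
have hZi i : Z i = X i + Hd i by rewrite /Hd addrC subrK.
have sumA0 : \sum_i Aop (b i) (a i) (Hd i) = 0.
  rewrite (eq_bigr (fun i => Aop (b i) (a i) (Z i) - Aop (b i) (a i) (X i))); last first.
    by move=> i _; rewrite AopB.
  by rewrite sumrB hZ subrr.
clearbody Hd.
have r0 : (0 < r)%N.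
  case: (posnP r) => // r0; exfalso; apply: hneq => i; have := ltn_ord i; by rewrite {2}r0.
pose i0 : 'I_r := Ordinal r0.
have g0 : 0 <= gamma := le_trans (opnorm_ge0 _) (hgam i0).
have al0 : 0 <= alpha := le_trans (frob_ge0 _) (hlam i0).1.
have mu0 : 0 <= mu h x b a by rewrite /mu; apply: mx_ge0.
pose Yp := fun i => PT (h i) (x i) (Hd i).
have hYp i : PT (h i) (x i) (Hd i) = Yp i by [].
have eY i : PT (h i) (x i) (Yp i) = Yp i by rewrite /Yp PT_PT.
have eHd i : Yp i + PTperp (h i) (x i) (Hd i) = Hd i.
  by rewrite /Yp (PTperp_PT (h i) (x i) (Hd i)) addrC subrK.
clearbody Yp.
pose tp := fun i => nucnorm (PTperp (h i) (x i) (Hd i)).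
have ap0 i : 0 <= frob (Yp i) by exact: frob_ge0.
have tp0 i : 0 <= tp i by exact: nucnorm_ge0.
have nucX i : nucnorm (X i) <= alpha_ i.
  rewrite /X /= scalemxAl.
  have := nuc_rank1 (real_complex R (alpha_ i) *: cmx (h i)) (cmx (x i)).
  move=> /le_trans; apply.
  rewrite -scalemxAl frobZr ger0_norm; last exact: ltW.
  rewrite frobE.
  by have := rip_E0 (hu i) (xu i); rewrite /E0 => ->; rewrite sqrtr1 mulr1.
have nucZ i : alpha_ i + rip (E0 (h i) (x i)) (Hd i) + tp i <= nucnorm (Z i).
  by rewrite hZi; apply: nuc_lower.
have stepB i : - alpha * frob (Yp i) - beta * tp i + rip (Aadj (b i) (a i) lam) (Hd i)
               <= rip (E0 (h i) (x i)) (Hd i).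
  pose Y := Aadj (b i) (a i) lam.
  have e : rip (E0 (h i) (x i)) (Hd i) =
     rip (E0 (h i) (x i) - PT (h i) (x i) Y) (Hd i) - rip (PTperp (h i) (x i) Y) (Hd i) + rip Y (Hd i).
    rewrite PTperp_PT (ripBl (E0 (h i) (x i))) (ripBl Y).
    set p1 := rip (E0 (h i) (x i)) _; set p2 := rip (PT _ _ _) _; set p3 := rip Y _.
    rewrite /p1 /p2 /p3; ring.
  have e1 : rip (E0 (h i) (x i) - PT (h i) (x i) Y) (Hd i) =
            rip (E0 (h i) (x i) - PT (h i) (x i) Y) (Yp i).
    have e1' : E0 (h i) (x i) - PT (h i) (x i) Y = PT (h i) (x i) (E0 (h i) (x i) - PT (h i) (x i) Y).
      by rewrite PTB (PT_E0 (x i) (hu i)) PT_PT.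
    by rewrite -hYp {1}e1' rip_PT.
  have b1 : - alpha * frob (Yp i) <= rip (E0 (h i) (x i) - PT (h i) (x i) Y) (Hd i).
    rewrite e1; have := CSabs (E0 (h i) (x i) - PT (h i) (x i) Y) (Yp i).
    rewrite ler_norml => /andP [hc _]; apply: le_trans hc; rewrite mulNr lerN2.
    by apply: ler_wpM2r; [exact: ap0 | exact: (hlam i).1].
  have b2 : rip (PTperp (h i) (x i) Y) (Hd i) <= beta * tp i.
    have e2 : rip (PTperp (h i) (x i) Y) (Hd i) =
              rip (PTperp (h i) (x i) Y) (PTperp (h i) (x i) (Hd i)).
      by rewrite -rip_PTperp PTperp_PTperp.
    rewrite e2; apply: le_trans (dual _ _) _.
      move=> v; apply: (opnorm_le (f := fun v : 'cV[C]_(N i) => PTperp (h i) (x i) Y *m v)).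
        by move=> U V; rewrite mulmxDr.
      by move=> c U; rewrite scalemxAr.
    by apply: ler_wpM2r; [exact: tp0 | exact: (hlam i).2].
  rewrite e; lra.
have stepC : \sum_i rip (Aadj (b i) (a i) lam) (Hd i) = 0.
  rewrite (eq_bigr (fun i => rip (Aop (b i) (a i) (Hd i)) lam)); last first.
    by move=> i _; rewrite rip_Aop ripC.
  by rewrite -rip_suml sumA0 rip0l.
pose S := \sum_i frob (Yp i).
pose T := \sum_i tp i.
pose Q := \sum_i frob (Yp i) ^+ 2.
have S0 : 0 <= S by apply: sumr_ge0 => i _.
have T0 : 0 <= T by apply: sumr_ge0 => i _.
pose v := \sum_i Aop (b i) (a i) (Yp i).
have ev : v = - \sum_i Aop (b i) (a i) (PTperp (h i) (x i) (Hd i)).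
  apply/eqP; rewrite -addr_eq0 /v -big_split /=; apply/eqP; rewrite -[RHS]sumA0.
  by apply: eq_bigr => i _; rewrite -AopD eHd.
have fvT : frob v <= gamma * T.
  rewrite ev frobN; apply: le_trans (frob_sum _ _ _) _; rewrite /T mulr_sumr; apply: ler_sum => i _.
  have l1 := opnorm_le (AopD (b i) (a i)) (AopZ (b i) (a i)) (PTperp (h i) (x i) (Hd i)).
  apply: le_trans l1 _; apply: le_trans (ler_wpM2r (frob_ge0 _) (hgam i)) _.
  exact: (ler_wpM2l g0 (frob_le_nuc _)).
have diag j : 3 / 4 * frob (Yp j) ^+ 2 <= rip (Aop (b j) (a j) (Yp j)) (Aop (b j) (a j) (Yp j)).
  have [fD fZ] := lin_iso (h j) (x j) (b j) (a j).
  have l1 := opnorm_le (f := fun Z : 'M[C]_(K j, N j) =>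
     PT (h j) (x j) (Aadj (b j) (a j) (Aop (b j) (a j) (PT (h j) (x j) Z))) - PT (h j) (x j) Z) fD fZ (Yp j).
  set g := (X in frob X <= _) in l1.
  have fg : frob g <= 4^-1 * frob (Yp j).
    apply: le_trans l1 _; exact: (ler_wpM2r (frob_ge0 _) (iso j)).
  have eg : PT (h j) (x j) (Aadj (b j) (a j) (Aop (b j) (a j) (Yp j))) = g + Yp j.
    by rewrite /g /= eY subrK.
  have e2 V : rip (Yp j) V = rip (Yp j) (PT (h j) (x j) V) by rewrite -rip_PT eY.
  have e3 : rip (Aop (b j) (a j) (Yp j)) (Aop (b j) (a j) (Yp j)) = rip (Yp j) g + rip (Yp j) (Yp j).
    by rewrite rip_Aop e2 eg ripDr.
  rewrite e3.
  have c1 := CSabs (Yp j) g; rewrite ler_norml in c1; case/andP: c1 => c1 _.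
  have ea : rip (Yp j) (Yp j) = frob (Yp j) ^+ 2 by rewrite -frob_sq.
  rewrite ea; have a0 := ap0 j; have fg0 := frob_ge0 g.
  have : frob (Yp j) * frob g <= frob (Yp j) * (4^-1 * frob (Yp j)) by exact: ler_wpM2l.
  move: c1; nra.
have offd j k : k != j ->
    - (mu h x b a * (frob (Yp j) * frob (Yp k))) <= rip (Aop (b j) (a j) (Yp j)) (Aop (b k) (a k) (Yp k)).
  move=> kj.
  have [fD fZ] := lin_mu (h j) (x j) (h k) (x k) (b j) (a j) (b k) (a k).
  have l1 := opnorm_le (f := fun Z : 'M[C]_(K k, N k) =>
     PT (h j) (x j) (Aadj (b j) (a j) (Aop (b k) (a k) (PT (h k) (x k) Z)))) fD fZ (Yp k).
  set g := (X in frob X <= _) in l1.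
  have hm := mx_le (fun j0 k0 => opnorm (fun Z : 'M[C]_(K k0, N k0) =>
     PT (h j0) (x j0) (Aadj (b j0) (a j0) (Aop (b k0) (a k0) (PT (h k0) (x k0) Z))))) kj.
  have fg : frob g <= mu h x b a * frob (Yp k).
    apply: le_trans l1 _; exact: (ler_wpM2r (frob_ge0 _) hm).
  have eg : PT (h j) (x j) (Aadj (b j) (a j) (Aop (b k) (a k) (Yp k))) = g.
    by rewrite /g /= eY.
  have e2 V : rip (Yp j) V = rip (Yp j) (PT (h j) (x j) V) by rewrite -rip_PT eY.
  have e3 : rip (Aop (b j) (a j) (Yp j)) (Aop (b k) (a k) (Yp k)) = rip (Yp j) g.
    by rewrite rip_Aop e2 eg.
  rewrite e3.
  have c1 := CSabs (Yp j) g; rewrite ler_norml in c1; case/andP: c1 => c1 _.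
  have a0 := ap0 j; have fg0 := frob_ge0 g.
  have : frob (Yp j) * frob g <= frob (Yp j) * (mu h x b a * frob (Yp k)) by exact: ler_wpM2l.
  move: c1; nra.
have fv2 : 3 / 4 * Q - mu h x b a * S ^+ 2 <= frob v ^+ 2.
  rewrite frob_sq {1}/v rip_suml.
  have : \sum_j (3 / 4 * frob (Yp j) ^+ 2 - mu h x b a * S * frob (Yp j)) <=
         \sum_j rip (Aop (b j) (a j) (Yp j)) v.
    apply: ler_sum => j _; rewrite /v rip_sumr (bigD1 j) //=.
    have d := diag j.
    have eS : S = frob (Yp j) + \sum_(k < r | k != j) frob (Yp k) by rewrite /S (bigD1 j).
    have o : - (mu h x b a * (frob (Yp j) * \sum_(k < r | k != j) frob (Yp k))) <=
             \sum_(k < r | k != j) rip (Aop (b j) (a j) (Yp j)) (Aop (b k) (a k) (Yp k)).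
      rewrite mulr_sumr mulr_sumr -sumrN; apply: ler_sum => k kj; exact: offd.
    move: o d; rewrite eS; set s1 := \sum_(k < r | k != j) frob (Yp k).
    have := ap0 j; have : 0 <= s1 by apply: sumr_ge0.
    move: mu0; nra.
  move=> le; apply: le_trans le; rewrite le_eqVlt; apply/orP; left; apply/eqP.
  rewrite big_split /= sumrN -mulr_sumr -mulr_sumr /Q /S expr2; ring.
have stepD : S <= 2 * r%:R * gamma * T.
  have cs : S ^+ 2 <= r%:R * Q by exact: count_CS.
  have rpos : 0 < (r%:R : R) by rewrite ltr0n.
  have r1 : 1 <= (r%:R : R) by rewrite ler1n.
  have hm4 : mu h x b a * (4 * r%:R) <= 1.
    by rewrite -ler_pdivlMr ?div1r // mulr_gt0.
  have sq0 : 0 <= S ^+ 2 by exact: sqr_ge0.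
  have h1 : r%:R * (4 * (mu h x b a * S ^+ 2)) <= r%:R * Q.
    apply: le_trans cs.
    have -> : r%:R * (4 * (mu h x b a * S ^+ 2)) = (mu h x b a * (4 * r%:R)) * S ^+ 2 by ring.
    by rewrite ler_piMl.
  have h2 : 4 * (mu h x b a * S ^+ 2) <= Q by move: h1; rewrite ler_pM2l.
  have fv0 := frob_ge0 v.
  have h3 : frob v ^+ 2 <= (gamma * T) ^+ 2.
    by rewrite ler_sqr // qualifE /= mulr_ge0.
  apply: sq_le; first by rewrite !mulr_ge0 // ler0n.
  have Q0 : 0 <= Q by apply: sumr_ge0 => i _; exact: sqr_ge0.
  have h5 : Q <= 2 * frob v ^+ 2 by lra.
  have h6 : r%:R * Q <= r%:R * (2 * (gamma * T) ^+ 2).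
    rewrite ler_pM2l //; lra.
  have q0 : 0 <= (gamma * T) ^+ 2 by exact: sqr_ge0.
  have -> : (2 * r%:R * gamma * T) ^+ 2 = 4 * r%:R ^+ 2 * (gamma * T) ^+ 2 by ring.
  move: h6 cs q0 r1; set q := (gamma * T) ^+ 2; set rr := (r%:R : R); nra.
have upX : \sum_i nucnorm (X i) <= \sum_i alpha_ i by apply: ler_sum => i _; exact: nucX.
have lowZ : \sum_i alpha_ i + (1 - beta) * T - alpha * S <= \sum_i nucnorm (Z i).
  have h1 : \sum_i (alpha_ i - alpha * frob (Yp i) - beta * tp i
                    + rip (Aadj (b i) (a i) lam) (Hd i) + tp i) <= \sum_i nucnorm (Z i).
    by apply: ler_sum => i _; have := nucZ i; have := stepB i; lra.
  apply: le_trans h1; rewrite le_eqVlt; apply/orP; left; apply/eqP.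
  rewrite !big_split /= stepC !sumrN -!mulr_sumr /S /T; ring.
have aS : alpha * S <= alpha * (2 * r%:R * gamma * T) by exact: (ler_wpM2l al0 stepD).
have [Tp|Tn] := ltrP 0 T.
  have cT : 0 < (1 - beta - 2 * r%:R * gamma * alpha) * T by exact: mulr_gt0.
  have id : (1 - beta - 2 * r%:R * gamma * alpha) * T
            = (1 - beta) * T - alpha * (2 * r%:R * gamma * T) by ring.
  rewrite id in cT.
  move: upX lowZ aS cT; rewrite /X; lra.
exfalso; apply: hneq => i.
have T00 : T = 0 by apply/eqP; rewrite eq_le Tn T0.
have tpi : tp i = 0 by apply: (psumr_eq0P (fun i _ => tp0 i) T00).
have S00 : S = 0.
  by have := stepD; rewrite T00 mulr0 => hs; apply/eqP; rewrite eq_le hs S0.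
have api : frob (Yp i) = 0 by apply: (psumr_eq0P (fun i _ => ap0 i) S00).
have P0 : PTperp (h i) (x i) (Hd i) = 0.
  apply: frob_eq0; apply/eqP; rewrite eq_le frob_ge0 andbT.
  by apply: le_trans (frob_le_nuc _) _; rewrite -/(tp i) tpi.
have Y0 : Yp i = 0 by exact: frob_eq0.
by rewrite hZi -eHd Y0 P0 addr0 addr0.
Qed.


End Main.

End Helpers.
Import Helpers.

Theorem lemma2 (R : realType) (r L : nat) (K N : 'I_r -> nat)
  (h : forall i, 'cV[R]_(K i)) (x : forall i, 'cV[R]_(N i)) (alpha_ : 'I_r -> R)
  (b : forall i, 'I_L -> 'cV[R[i]]_(K i)) (a : forall i, 'I_L -> 'cV[R]_(N i))
  (gamma : R) :
  (forall i, unitvec (h i)) -> (forall i, unitvec (x i)) ->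
  (forall i, 0 < alpha_ i) ->
  (forall i, opnorm (fun Z : 'M[R[i]]_(K i, N i) =>
     PT (h i) (x i) (Aadj (b i) (a i) (Aop (b i) (a i) (PT (h i) (x i) Z)))
     - PT (h i) (x i) Z) <= 4^-1) ->
  mu h x b a <= (4 * r%:R)^-1 ->
  (forall i, opnorm (Aop (b i) (a i)) <= gamma) ->
  let X := fun i => real_complex R (alpha_ i) *: (cmx (h i) *m adjmx (cmx (x i))) in
  let y := \sum_(i < r) Aop (b i) (a i) (X i) in
  (forall alpha beta : R,
     (exists lam : 'cV[R[i]]_L, forall i,
        frob (cmx (h i) *m adjmx (cmx (x i)) - PT (h i) (x i) (Aadj (b i) (a i) lam))
          <= alpha /\
        specnorm (PTperp (h i) (x i) (Aadj (b i) (a i) lam)) <= beta) ->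
     0 < (1 - beta) - 2 * r%:R * gamma * alpha ->
     unique_minimizer b a y X)
  /\
  ((exists lam : 'cV[R[i]]_L, forall i,
      frob (cmx (h i) *m adjmx (cmx (x i)) - PT (h i) (x i) (Aadj (b i) (a i) lam))
        <= (5 * r%:R * gamma)^-1 /\
      specnorm (PTperp (h i) (x i) (Aadj (b i) (a i) lam)) <= 2^-1) ->
   unique_minimizer b a y X).
Proof.
move=> hu xu alp iso hmu hgam X y.
have part1 : forall alpha beta : R,
     (exists lam : 'cV[R[i]]_L, forall i,
        frob (cmx (h i) *m adjmx (cmx (x i)) - PT (h i) (x i) (Aadj (b i) (a i) lam))
          <= alpha /\
        specnorm (PTperp (h i) (x i) (Aadj (b i) (a i) lam)) <= beta) ->
     0 < (1 - beta) - 2 * r%:R * gamma * alpha ->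
     unique_minimizer b a y X.
  move=> alpha beta [lam hlam] hpos; split; first by [].
  move=> Z hZ hneq.
  exact: (main_ineq hu xu alp iso hmu hgam hlam hpos hZ hneq).
split; first exact: part1.
move=> hlam; apply: (part1 _ _ hlam).
set D := 5 * r%:R * gamma.
have [->|nz] := eqVneq D 0; first by rewrite invr0 mulr0; lra.
have e : 2 * r%:R * gamma = 2 / 5 * D by rewrite /D; field.
rewrite e mulfK //; lra.
Qed.
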